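(* Every bipartite graph $G$ is strongly $\Delta(G)$-edge-orientable.
   Context: An orientation of a graph $H$ is any digraph obtained by replacing each edge $uv$ with the arc $(u,v)$, with the arc $(v,u)$, or with both arcs. A kernel of a digraph $D$ is an independent set $S$ such that every vertex of $D-S$ has an out-neighbor in $S$. $D$ is kernel-perfect if every induced subdigraph of $D$ has a kernel. For $f:V(H)\to\mathbb{N}$, an orientation $D$ of $H$ is $f$-kernel-perfect if it is kernel-perfect and $f(v)\ge 1+d^+_D(v)$ for all $v$. For $f:E(G)\to\mathbb{N}$, $G$ is $f$-edge-orientable if its line graph $L(G)$ admits an $f$-kernel-perfect orientation. For $v\in V(G)$, define $f_{k,v}:E(G)\to\mathbb{N}$ by $f_{k,v}(e)=d_G(v)$ if $e$ is incident to $v$, and $f_{k,v}(e)=k$ otherwise. $G$ is strongly $k$-edge-orientable if $G$ is $f_{k,v}$-edge-orientable for every $v\in V(G)$. *)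

(* Defs.v *)
(* Finite simple graphs as symmetric irreflexive relations. *)
From mathcomp Require Import all_boot.
Set Implicit Arguments. Unset Strict Implicit. Unset Printing Implicit Defensive.

Section Digraphs.
Variable X : finType.

Definition is_orientation (h : rel X) (arc : rel X) : Prop :=
  (forall x y, arc x y -> h x y) /\ (forall x y, h x y -> arc x y || arc y x).

Definition is_kernel_in (arc : rel X) (A S : {set X}) : Prop :=
  S \subset A /\
  (forall x y, x \in S -> y \in S -> ~~ arc x y) /\
  (forall x, x \in A -> x \notin S -> exists2 y, y \in S & arc x y).

Definition kernel_perfect (arc : rel X) : Prop :=
  forall A : {set X}, exists S : {set X}, is_kernel_in arc A S.

Definition outdeg (arc : rel X) (x : X) : nat := #|[set y | arc x y]|.

Definition f_kernel_perfect_orientation (h : rel X) (f : X -> nat) (arc : rel X) :=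
  [/\ is_orientation h arc, kernel_perfect arc &
      forall x, 1 + outdeg arc x <= f x].
End Digraphs.

Section Graphs.
Variable V : finType.
Variable adj : rel V.

Definition deg (v : V) : nat := #|[set u | adj v u]|.
Definition maxdeg : nat := \max_(v : V) deg v.

Definition bipartite : Prop :=
  exists c : V -> bool, forall u v, adj u v -> c u != c v.

Definition is_edge (e : {set V}) : bool := [exists u, exists v, adj u v && (e == [set u; v])].
Definition edge := {e : {set V} | is_edge e}.

Definition line_adj : rel edge :=
  fun e1 e2 => (e1 != e2) && [exists w, (w \in val e1) && (w \in val e2)].

Definition f_edge_orientable (f : edge -> nat) : Prop :=
  exists arc : rel edge, f_kernel_perfect_orientation line_adj f arc.

Definition f_kv (k : nat) (v : V) : edge -> nat :=
  fun e => if v \in val e then deg v else k.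

Definition strongly_edge_orientable (k : nat) : Prop :=
  forall v : V, f_edge_orientable (f_kv k v).
End Graphs.

(* Main.v *)
Require Import Defs.
From mathcomp Require Import all_boot.
From mathcomp Require Import zify.
Set Implicit Arguments. Unset Strict Implicit. Unset Printing Implicit Defensive.

Section Stable.
Variables (E M W : finType) (a : E -> M) (b : E -> W) (r : E -> nat).
Hypothesis ra : forall e e', a e = a e' -> r e = r e' -> e = e'.
Definition sarc : rel E := fun e e' =>
  ((a e == a e') && (r e < r e')) || ((b e == b e') && (r e' < r e)).

Variable S : {set E}.
Definition Pr (R : {set E}) := [set e in S :\: R |
   [forall e' in S :\: R, (a e' == a e) ==> (r e' <= r e)]].
Definition Nw (R : {set E}) := [set e in Pr R | [exists e' in Pr R, (b e' == b e) && (r e' < r e)]].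
Definition Inv (R : {set E}) := R \subset S /\ forall e, e \in R ->
   exists2 e', e' \in Pr R & (b e' == b e) && (r e' < r e).

Lemma inv0 : Inv set0.
Proof. by split; [apply: sub0set | move=> e; rewrite inE]. Qed.

Lemma kernel_of R : Inv R -> Nw R = set0 -> is_kernel_in sarc S (Pr R).
Proof.
move=> [RS IR] N0; split; [|split].
- by apply/subsetP=> x; rewrite !inE => /andP[/andP[]].
- move=> x y xK yK; apply/negP; rewrite /sarc => /orP[/andP[/eqP axy rxy]|/andP[/eqP bxy ryx]].
  + move: xK; rewrite inE => /andP[_ /forall_inP /(_ y)].
    have yS : y \in S :\: R by move: yK; rewrite inE => /andP[].
    by move=> /(_ yS); rewrite axy eqxx /= leqNgt rxy.
  + have : x \in Nw R.
      rewrite inE xK; apply/existsP; exists y; rewrite yK bxy eqxx ryx //.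
    by rewrite N0 inE.
- move=> x xS xK.
  case xR: (x \in R).
    have [e' e'K /andP[/eqP be' re']] := IR x xR.
    by exists e' => //; rewrite /sarc be' eqxx re' orbT.
  have xSR : x \in S :\: R by rewrite inE xR xS.
  pose P := fun t => (t \in S :\: R) && (a t == a x).
  have Px : P x by rewrite /P xSR eqxx.
  case: (arg_maxnP r Px) => t /andP[tSR /eqP atx] tmax.
  have tK : t \in Pr R.
    rewrite inE tSR; apply/forall_inP=> e' e'S; apply/implyP=> /eqP ae'.
    by apply: tmax; rewrite /P e'S ae' atx eqxx.
  exists t => //; rewrite /sarc atx eqxx /=.
  have : r x <= r t by exact: tmax x Px.
  rewrite leq_eqVlt => /orP[/eqP rxt|->//].
  by move: xK; rewrite (ra (esym atx) rxt) tK.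
Qed.

Lemma inv_step R : Inv R -> Inv (R :|: Nw R).
Proof.
move=> [RS IR]; have NPr : Nw R \subset Pr R by apply/subsetP=> x; rewrite inE => /andP[].
have PrS : forall R0, Pr R0 \subset S :\: R0.
  by move=> R0; apply/subsetP=> x; rewrite inE => /andP[].
split.
  rewrite subUset RS /=; apply: subset_trans NPr _; apply: subset_trans (PrS R) _.
  exact: subsetDl.
move=> e eR'.
have [e0 e0P /andP[/eqP be0 re0]] : exists2 e0, e0 \in Pr R & (b e0 == b e) && (r e0 < r e).
  move: eR'; rewrite inE => /orP[/IR //|].
  by rewrite inE => /andP[_ /exists_inP[e0 ? ?]]; exists e0.
pose P := fun h => (h \in Pr R) && (b h == b e).
have Pe0 : P e0 by rewrite /P e0P be0 eqxx.
case: (arg_minnP r Pe0) => h /andP[hP /eqP bh] hmin.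
have hN : h \notin Nw R.
  rewrite inE hP /=; apply/exists_inP=> -[e'' e''P /andP[/eqP be'' re'']].
  have : r h <= r e'' by apply: hmin; rewrite /P e''P be'' bh eqxx.
  by rewrite leqNgt re''.
exists h; last by rewrite bh eqxx /=; apply: leq_ltn_trans re0; exact: hmin.
have hSR : h \in S :\: R by move/subsetP: (PrS R) => /(_ h hP).
rewrite inE; apply/andP; split.
  rewrite in_setD in_setU negb_or hN andbT.
  by move: hSR; rewrite in_setD.
apply/forall_inP=> e' e'S; move: hP; rewrite inE => /andP[_ /forall_inP]; apply.
by move: e'S; rewrite !in_setD in_setU negb_or => /andP[/andP[-> _] ->].
Qed.

Lemma stable_kernel : exists K, is_kernel_in sarc S K.
Proof.
suff H : forall n R, #|S :\: R| <= n -> Inv R -> exists K, is_kernel_in sarc S K.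
  exact: (H _ set0 (leqnn _) inv0).
elim=> [|n IH] R hn IR.
  have SR0 : S :\: R = set0 by apply/eqP; rewrite -cards_eq0 -leqn0.
  exists (Pr R); apply: kernel_of => //; apply/eqP; rewrite -subset0.
  apply/subsetP=> x; rewrite inE => /andP[]; rewrite inE => /andP[].
  by rewrite SR0 inE.
have [N0|/set0Pn[z zN]] := eqVneq (Nw R) set0.
  by exists (Pr R); apply: kernel_of.
apply: (IH (R :|: Nw R)); last exact: inv_step.
have zSR : z \in S :\: R by move: zN; rewrite !inE => /andP[/andP[/andP[-> ->]]].
suff : #|S :\: (R :|: Nw R)| < #|S :\: R| by move=> h; rewrite -ltnS; apply: leq_trans h hn.
apply: proper_card; apply/properP; split.
  by apply/subsetP=> x; rewrite !inE negb_or => /andP[/andP[-> _] ->].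
by exists z => //; rewrite in_setD in_setU zN orbT.
Qed.
End Stable.

Lemma missing_color (s : seq nat) D : size s < D -> exists2 a, a < D & a \notin s.
Proof.
move=> hs; case hh: (has (fun i => i \notin s) (iota 0 D)).
  by case/hasP: hh => a; rewrite mem_iota add0n => /andP[_ aD] an; exists a.
have sub : {subset iota 0 D <= s}.
  move=> i ii; move/negbT: hh; rewrite -all_predC => /allP /(_ i ii) /=.
  by rewrite negbK.
have := uniq_leq_size (iota_uniq 0 D) sub; rewrite size_iota => h.
by move: (leq_ltn_trans h hs); rewrite ltnn.
Qed.

Section Konig.
Variables (E V : finType) (pa pb : E -> V) (D : nat).
Hypothesis dA : forall x, #|[set e | pa e == x]| <= D.
Hypothesis dB : forall y, #|[set e | pb e == y]| <= D.

Definition proper (F : {set E}) (col : E -> nat) :=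
 [/\ (forall e, e \in F -> col e < D),
  (forall e e', e \in F -> e' \in F -> pa e = pa e' -> col e = col e' -> e = e') &
  (forall e e', e \in F -> e' \in F -> pb e = pb e' -> col e = col e' -> e = e')].

Lemma miss (p : E -> V) (F : {set E}) (col : E -> nat) x e0 :
  (forall e, e \in F -> col e < D) -> #|[set e | p e == x]| <= D ->
  e0 \notin F -> p e0 = x ->
  exists2 a, a < D & forall e, e \in F -> p e = x -> col e != a.
Proof.
move=> cD dx e0F pe0.
have lt : #|[set e in F | p e == x]| < D.
  apply: leq_trans dx; apply: proper_card; apply/properP; split.
    by apply/subsetP=> e; rewrite !inE => /andP[].
  by exists e0; rewrite !inE ?pe0 ?eqxx // (negbTE e0F).
have [a aD an] : exists2 a, a < D & a \notin [seq col e | e <- enum [set e in F | p e == x]].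
  by apply: missing_color; rewrite size_map -cardE.
exists a => // e eF pex; apply/eqP=> cea; move/negP: an; apply; apply/mapP.
by exists e => //; rewrite mem_enum !inE eF pex eqxx.
Qed.

Definition swap (a b g : nat) := if g == a then b else if g == b then a else g.
Lemma swapK a b : involutive (swap a b).
Proof.
move=> g; rewrite /swap; case: (eqVneq g a) => [->|ga].
  by case: (eqVneq b a) => [->|ba]; rewrite ?eqxx // eqxx.
case: (eqVneq g b) => [->|gb]; first by rewrite eqxx.
by rewrite (negbTE ga) (negbTE gb).
Qed.

Lemma swap_in a b g : g \in [:: a; b] -> swap a b g \in [:: a; b].
Proof. by rewrite /swap !inE; case: (eqVneq g a) => [_|_] /=; rewrite ?eqxx ?orbT //; case: (eqVneq g b) => //= _; rewrite eqxx. Qed.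
Lemma swap_nin a b g : g \notin [:: a; b] -> swap a b g = g.
Proof. by rewrite /swap !inE negb_or => /andP[/negbTE -> /negbTE ->]. Qed.

Section Step.
Variables (F : {set E}) (col : E -> nat) (e0 : E).
Hypothesis e0F : e0 \notin F.
Hypothesis pc : proper F col.

Section Kempe.
Variables (al be : nat) (e1 : E).
Hypothesis alD : al < D.
Hypothesis beD : be < D.
Hypothesis amiss : forall e, e \in F -> pa e = pa e0 -> col e != al.
Hypothesis bmiss : forall e, e \in F -> pb e = pb e0 -> col e != be.
Hypothesis e1F : e1 \in F.
Hypothesis pbe1 : pb e1 = pb e0.
Hypothesis cole1 : col e1 = al.

Lemma ab : al != be.
Proof. by apply/eqP=> ab; move: (bmiss e1F pbe1); rewrite cole1 ab eqxx. Qed.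

Definition Rk : rel E := fun e e' => [&& e \in F, e' \in F, col e \in [:: al; be],
   col e' \in [:: al; be] & (pa e == pa e') || (pb e == pb e')].

Lemma path_F f p : path Rk f p -> all (mem F) p.
Proof.
elim: p f => //= g p IH f /andP[Rfg Hp]; rewrite (IH _ Hp) andbT.
by case/and5P: Rfg.
Qed.

Lemma alt p f : path Rk f p -> uniq (f :: p) -> f \in F ->
  (col f = al -> forall g, g \in p -> pb g = pb f -> col g <> be) ->
  (col f = be -> forall g, g \in p -> pa g = pa f -> col g <> al) ->
  p != [::] ->
  (col (last f p) = be -> exists h, [/\ h \in F, col h = al & pa h = pa (last f p)]).
Proof.
have [pc1 pc2 pc3] := pc.
elim: p f => // g p IH f /= /andP[Rfg Hp] /andP[fnin up] fF ha hb _.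
move: Rfg => /and5P[_ gF cf cg sh].
have fg : f != g by apply: contraNneq fnin => ->; rewrite inE eqxx.
have cfg : col f != col g.
  apply/eqP=> cfg; move/eqP: fg; apply; case/orP: sh => /eqP sh.
    exact: pc2. exact: pc3.
move: cf cg; rewrite !inE => cf cg.
case/orP: cf => /eqP cf.
  have cgb : col g = be.
    by case/orP: cg => /eqP // cg; move: cfg; rewrite cf cg eqxx.
  have paf : pa f = pa g.
    case/orP: sh => /eqP // sh.
    by exfalso; apply: (ha cf g) => //; rewrite ?inE ?eqxx.
  case: p IH Hp fnin up ha hb => [|g2 p] IH Hp fnin up ha hb.
    by move=> _; exists f; rewrite cf paf.
  apply: IH => //; first by rewrite cgb => /eqP; rewrite eq_sym (negbTE ab).
  move=> _ h hp pah cha.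
  have hf : h = f.
    apply: pc2 => //; first by have := path_F Hp => /allP; apply.
    by rewrite pah paf. by rewrite cha cf.
  by move: fnin; rewrite -hf in_cons hp orbT.
have cga : col g = al.
  by case/orP: cg => /eqP // cg; move: cfg; rewrite cf cg eqxx.
have pbf : pb f = pb g.
  case/orP: sh => /eqP // sh.
  by exfalso; apply: (hb cf g) => //; rewrite ?inE ?eqxx.
case: p IH Hp fnin up ha hb => [|g2 p] IH Hp fnin up ha hb.
  by rewrite /= cga => /eqP; rewrite (negbTE ab).
apply: IH => //; last by rewrite cga => /eqP; rewrite (negbTE ab).
move=> _ h hp pbh chb.
have hf : h = f.
  apply: pc3 => //; first by have := path_F Hp => /allP; apply.
  by rewrite pbh pbf. by rewrite chb cf.
by move: fnin; rewrite -hf in_cons hp orbT.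
Qed.

Definition K := [set e | connect Rk e1 e].

Lemma keyK f : f \in K -> f \in F -> pa f = pa e0 -> col f = be -> False.
Proof.
rewrite inE => /connectP[p0 Hp0 ->] fF paf cf.
case: (shortenP Hp0) => p Hp up _ {Hp0} in fF paf cf *.
have pn : p != [::].
  by apply/eqP=> pnil; move: cf; rewrite pnil /= cole1 => abe; move: ab; rewrite abe eqxx.
have H1 : col e1 = al -> forall g, g \in p -> pb g = pb e1 -> col g <> be.
  move=> _ g gp pbg cg.
  by move: (bmiss (allP (path_F Hp) g gp) (etrans pbg pbe1)); rewrite cg eqxx.
have H2 : col e1 = be -> forall g, g \in p -> pa g = pa e1 -> col g <> al.
  by move=> c; move: ab; rewrite -c cole1 eqxx.
have [h [hF ch pah]] := alt Hp up e1F H1 H2 pn cf.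
by move: (amiss hF (etrans pah paf)); rewrite ch eqxx.
Qed.

Definition colK e := if e == e0 then al else if e \in K then swap al be (col e) else col e.

Lemma colK_F e e' : e \in F -> e' \in F -> (pa e = pa e' \/ pb e = pb e') ->
   colK e = colK e' -> col e = col e'.
Proof.
have e0n : forall x, x \in F -> (x == e0) = false.
  by move=> x xF; apply: contraNF e0F => /eqP <-.
move=> eF e'F sh; rewrite /colK (e0n _ eF) (e0n _ e'F).
have side : forall x y, x \in F -> y \in F -> (pa x = pa y \/ pb x = pb y) ->
     x \in K -> y \notin K -> swap al be (col x) = col y -> col x = col y.
  move=> x y xF yF sxy xK yK.
  case hx: (col x \in [:: al; be]).
    move=> hs; exfalso; move/negP: yK; apply.
    move: xK; rewrite !inE => hx1; apply: connect_trans hx1 _; apply: connect1.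
    rewrite /Rk xF yF hx -hs /=.
    rewrite swap_in ?hx //.
    by case: sxy => ->; rewrite eqxx ?orbT.
  by rewrite swap_nin // hx.
case eK: (e \in K); case e'K: (e' \in K).
- by move/(f_equal (swap al be)); rewrite !swapK.
- by apply: side => //; rewrite e'K.
- move=> h; apply/esym; apply: side => //; rewrite ?eK ?h //.
  by case: sh; [left|right].
- done.
Qed.

Lemma proper_K : proper (e0 |: F) colK.
Proof.
have [pc1 pc2 pc3] := pc.
have e0n : forall x, x \in F -> (x == e0) = false.
  by move=> x xF; apply: contraNF e0F => /eqP <-.
have swapD : forall g, g < D -> swap al be g < D.
  by move=> g gD; rewrite /swap; case: eqP => // _; case: eqP.
have swal : forall g, swap al be g = al -> g = be.
  move=> g; rewrite /swap; case: eqP => [->|ga]; first by move=> /eqP; rewrite eq_sym (negbTE ab).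
  by case: eqP => // _ /ga.
have na : forall e, e \in F -> pa e = pa e0 -> colK e != al.
  move=> e eF pae; rewrite /colK e0n //; case: ifP => eK.
    by apply/eqP => /swal ce; exact: (keyK eK eF pae ce).
  exact: amiss.
have nb : forall e, e \in F -> pb e = pb e0 -> colK e != al.
  move=> e eF pbe; rewrite /colK e0n //; case: ifP => eK.
    by apply/eqP => /swal ce; move: (bmiss eF pbe); rewrite ce eqxx.
  apply/eqP=> ce; have ee1 : e = e1 by apply: pc3 => //; rewrite ?pbe ?pbe1 ?ce ?cole1.
  by move: eK; rewrite ee1 inE connect0.
split.
- move=> e; rewrite in_setU1 => /orP[/eqP ->|eF]; first by rewrite /colK eqxx.
  by rewrite /colK e0n //; case: ifP => _; [apply: swapD|]; apply: pc1.
- move=> e e'; rewrite !in_setU1 => /orP[/eqP ->|eF] /orP[/eqP ->|e'F] // sh.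
  + by rewrite {1}/colK eqxx => h; move: (na _ e'F (esym sh)); rewrite -h eqxx.
  + by rewrite {2}/colK eqxx => h; move: (na _ eF sh); rewrite h eqxx.
  + by move=> h; apply: pc2 => //; apply: colK_F => //; left.
- move=> e e'; rewrite !in_setU1 => /orP[/eqP ->|eF] /orP[/eqP ->|e'F] // sh.
  + by rewrite {1}/colK eqxx => h; move: (nb _ e'F (esym sh)); rewrite -h eqxx.
  + by rewrite {2}/colK eqxx => h; move: (nb _ eF sh); rewrite h eqxx.
  + by move=> h; apply: pc3 => //; apply: colK_F => //; right.
Qed.
End Kempe.

Lemma step : exists col', proper (e0 |: F) col'.
Proof.
have [pc1 pc2 pc3] := pc.
have [al alD amiss] := miss pc1 (dA (pa e0)) e0F (erefl _).
have [be beD bmiss] := miss pc1 (dB (pb e0)) e0F (erefl _).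
have e0n : forall x, x \in F -> (x == e0) = false.
  by move=> x xF; apply: contraNF e0F => /eqP <-.
case: (boolP [exists e1 in F, (pb e1 == pb e0) && (col e1 == al)]).
  case/exists_inP=> e1 e1F /andP[/eqP pbe1 /eqP ce1].
  by exists (colK al be e1); apply: proper_K.
move=> hn; pose c' := fun e => if e == e0 then al else col e.
have hn' : forall e, e \in F -> pb e = pb e0 -> col e != al.
  move=> e eF pbe; apply/negP=> ce; move/negP: hn; apply; apply/exists_inP.
  by exists e => //; rewrite pbe eqxx.
exists c'; split.
- by move=> e; rewrite in_setU1 /c' => /orP[/eqP ->|eF]; rewrite ?eqxx ?e0n //; apply: pc1.
- move=> e e'; rewrite !in_setU1 /c' => /orP[/eqP ->|eF] /orP[/eqP ->|e'F] //; rewrite ?eqxx ?e0n //.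
  + by move=> sh h; move: (amiss _ e'F (esym sh)); rewrite h eqxx.
  + by move=> sh h; move: (amiss _ eF sh); rewrite h eqxx.
  + exact: pc2.
- move=> e e'; rewrite !in_setU1 /c' => /orP[/eqP ->|eF] /orP[/eqP ->|e'F] //; rewrite ?eqxx ?e0n //.
  + by move=> sh h; move: (hn' _ e'F (esym sh)); rewrite h eqxx.
  + by move=> sh h; move: (hn' _ eF sh); rewrite h eqxx.
  + exact: pc3.
Qed.
End Step.

Lemma konig : exists col, proper setT col.
Proof.
suff H : forall n (F : {set E}), #|F| = n -> exists col, proper F col by exact: H _ _ erefl.
elim=> [|n IH] F hF.
  exists (fun _ => 0); move: hF => /eqP; rewrite cards_eq0 => /eqP ->.
  by split=> ?; rewrite inE.
have /set0Pn[e0 e0F] : F != set0 by rewrite -card_gt0 hF.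
have hF' : #|F :\ e0| = n by move: hF; rewrite (cardsD1 e0) e0F add1n => -[].
have [col pc] := IH (F :\ e0) hF'.
have e0n : e0 \notin F :\ e0 by rewrite !inE eqxx.
have [col' pc'] := step e0n pc.
by exists col'; rewrite setD1K in pc'.
Qed.
End Konig.

Section Ends.
Variables (V : finType) (adj : rel V) (c : V -> bool) (v : V).
Hypothesis sym : symmetric adj.
Hypothesis hc : forall u w, adj u w -> c u != c w.
Local Notation E := (edge adj).
Definition pa (e : E) := odflt v [pick x in val e | c x].
Definition pb (e : E) := odflt v [pick x in val e | ~~ c x].

Lemma pick2 (u w : V) (P : pred V) : P u -> ~~ P w -> [pick x in [set u; w] | P x] = Some u.
Proof.
move=> Pu Pw; case: pickP => [x /andP[]|/(_ u)]; last by rewrite !inE eqxx Pu.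
rewrite !inE => /orP[/eqP -> //|/eqP ->]; by rewrite (negbTE Pw).
Qed.

Lemma ends e : [/\ val e = [set pa e; pb e], c (pa e), ~~ c (pb e) & adj (pa e) (pb e)].
Proof.
rewrite /pa /pb; case: e => s /= /existsP[u /existsP[w /andP[uw /eqP ->]]].
wlog cu : u w uw / c u.
  move=> H; case cu: (c u); first exact: H.
  rewrite setUC; apply: H; first by rewrite sym.
  by have := hc uw; rewrite cu; case: (c w).
have cw : ~~ c w by have := hc uw; rewrite cu; case: (c w).
rewrite (pick2 (P := c) cu cw) setUC (pick2 (P := fun x => ~~ c x)) ?negbK //= setUC.
by rewrite cu cw uw.
Qed.
End Ends.

Section Main.
Variables (V : finType) (adj : rel V) (c : V -> bool) (v : V).
Hypothesis sym : symmetric adj.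
Hypothesis hc : forall u w, adj u w -> c u != c w.
Local Notation E := (edge adj).
Local Notation pa := (@pa V adj c v).
Local Notation pb := (@pb V adj c v).
Local Notation D := (maxdeg adj).

Lemma in_e (e : E) w : (w \in val e) = (w == pa e) || (w == pb e).
Proof. by case: (ends v sym hc e) => -> _ _ _; rewrite !inE. Qed.

Lemma pab (e e' : E) : pa e = pa e' -> pb e = pb e' -> e = e'.
Proof.
move=> h1 h2; apply: val_inj.
by case: (ends v sym hc e) => -> _ _ _; case: (ends v sym hc e') => -> _ _ _; rewrite h1 h2.
Qed.

Lemma ca (e : E) : c (pa e). Proof. by case: (ends v sym hc e). Qed.
Lemma cb (e : E) : ~~ c (pb e). Proof. by case: (ends v sym hc e). Qed.
Lemma adje (e : E) : adj (pa e) (pb e). Proof. by case: (ends v sym hc e). Qed.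

Lemma degA x : #|[set e | pa e == x]| <= deg adj x.
Proof.
rewrite -(@card_in_imset _ _ pb); last first.
  move=> e e'; rewrite !inE => /eqP h1 /eqP h2 h; apply: pab => //; by rewrite h1 h2.
apply: subset_leq_card; apply/subsetP=> u /imsetP[e]; rewrite !inE => /eqP <- ->.
exact: adje.
Qed.

Lemma degB x : #|[set e | pb e == x]| <= deg adj x.
Proof.
rewrite -(@card_in_imset _ _ pa); last first.
  move=> e e'; rewrite !inE => /eqP h1 /eqP h2 h; apply: pab => //; by rewrite h1 h2.
apply: subset_leq_card; apply/subsetP=> u /imsetP[e]; rewrite !inE => /eqP <- ->.
by rewrite sym; exact: adje.
Qed.

Lemma degD x : deg adj x <= D.
Proof. exact: (@leq_bigmax _ (deg adj) x). Qed.

Lemma deg_v : #|[set e : E | v \in val e]| <= deg adj v.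
Proof.
case cv: (c v).
  rewrite (_ : [set e : E | v \in val e] = [set e | pa e == v]) ?degA //.
  apply/setP=> e; rewrite !inE in_e; case: (eqVneq v (pb e)) => [vb|]; last by rewrite orbF eq_sym.
  by move: (cb e); rewrite -vb cv.
rewrite (_ : [set e : E | v \in val e] = [set e | pb e == v]) ?degB //.
apply/setP=> e; rewrite !inE in_e; case: (eqVneq v (pa e)) => [va|]; last by rewrite /= eq_sym.
by move: (ca e); rewrite -va cv.
Qed.

Variable col : E -> nat.
Hypothesis c1 : forall e, col e < D.
Hypothesis c2 : forall e e', pa e = pa e' -> col e = col e' -> e = e'.
Hypothesis c3 : forall e e', pb e = pb e' -> col e = col e' -> e = e'.

Definition inS (g : nat) := [exists e : E, (v \in val e) && (col e == g)].
Definition Rv g := g + (if inS g == c v then 0 else D).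
Definition r e := Rv (col e).

Lemma Rinj g g' : g < D -> g' < D -> Rv g = Rv g' -> g = g'.
Proof. by rewrite /Rv; case: (inS g == c v); case: (inS g' == c v); lia. Qed.

Lemma ra e e' : pa e = pa e' -> r e = r e' -> e = e'.
Proof. by move=> h1 h2; apply: c2 => //; apply: Rinj. Qed.
Lemma rb e e' : pb e = pb e' -> r e = r e' -> e = e'.
Proof. by move=> h1 h2; apply: c3 => //; apply: Rinj. Qed.

Definition arc := sarc pa pb r.

Lemma orient : is_orientation (@line_adj V adj) arc.
Proof.
split.
  move=> x y; rewrite /arc /sarc /line_adj => /orP[] /andP[/eqP h lt].
    have xy : x != y by apply: contraTneq lt => ->; rewrite ltnn.
    by rewrite xy /=; apply/existsP; exists (pa x); rewrite !in_e h !eqxx.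
  have xy : x != y by apply: contraTneq lt => ->; rewrite ltnn.
  by rewrite xy /=; apply/existsP; exists (pb x); rewrite !in_e h !eqxx !orbT.
move=> x y /andP[xy /existsP[w /andP[]]]; rewrite !in_e.
have nab : forall e e' : E, pa e != pb e'.
  by move=> e e'; apply: contraNneq (cb e') => <-; exact: ca.
rewrite /arc /sarc.
case/orP=> /eqP wx; case/orP=> /eqP wy.
- have h : pa x = pa y by rewrite -wx -wy.
  rewrite h eqxx /=; case: (ltngtP (r x) (r y)) => hr; try by rewrite ?hr ?orbT.
  by move: xy; rewrite (ra h hr) eqxx.
- by move: (nab x y); rewrite -wx -wy eqxx.
- by move: (nab y x); rewrite -wx -wy eqxx.
- have h : pb x = pb y by rewrite -wx -wy.
  rewrite h eqxx /=; case: (ltngtP (r x) (r y)) => hr; try by rewrite ?hr ?orbT.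
  by move: xy; rewrite (rb h hr) eqxx.
Qed.

Lemma kp : kernel_perfect arc.
Proof. move=> A; exact: (@stable_kernel _ _ _ pa pb r ra A). Qed.

Definition cI (y : E) : 'I_D := Ordinal (c1 y).

Lemma cnt e (T : {set 'I_D}) :
  (forall y, pa e = pa y -> r e < r y -> cI y \in T) ->
  (forall y, pb e = pb y -> r y < r e -> cI y \in T) ->
  cI e \in T -> outdeg arc e < #|T|.
Proof.
move=> h1 h2 he.
pose P1 := [set y | (pa e == pa y) && (r e < r y)].
pose P2 := [set y | (pb e == pb y) && (r y < r e)].
pose T1 := [set i in T | Rv (col e) < Rv i].
pose T2 := [set i in T | Rv i < Rv (col e)].
have -> : outdeg arc e = #|P1 :|: P2|.
  rewrite /outdeg; have -> // : [set y | arc e y] = P1 :|: P2.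
  by apply/setP=> y; rewrite !inE.
apply: leq_ltn_trans (leq_card_setU _ _) _.
have e1 : #|P1| = #|cI @: P1|.
  rewrite card_in_imset // => y y'; rewrite !inE => /andP[/eqP h _] /andP[/eqP h' _] /(congr1 val) /= hc'.
  by apply: c2 => //; rewrite -h -h'.
have e2 : #|P2| = #|cI @: P2|.
  rewrite card_in_imset // => y y'; rewrite !inE => /andP[/eqP h _] /andP[/eqP h' _] /(congr1 val) /= hc'.
  by apply: c3 => //; rewrite -h -h'.
have s1 : cI @: P1 \subset T1.
  apply/subsetP=> i /imsetP[y]; rewrite !inE => /andP[/eqP h lt] ->.
  by rewrite h1 //= -/(r y).
have s2 : cI @: P2 \subset T2.
  apply/subsetP=> i /imsetP[y]; rewrite !inE => /andP[/eqP h lt] ->.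
  by rewrite h2 //= -/(r y).
have dis : T1 :&: T2 = set0.
  apply/setP=> i; rewrite !inE; apply/negP=> /andP[/andP[_ a] /andP[_ b]].
  by move: (ltn_trans a b); rewrite ltnn.
have eqU : #|T1| + #|T2| = #|T1 :|: T2| by rewrite cardsU dis cards0 subn0.
rewrite e1 e2; apply: leq_ltn_trans (leq_add (subset_leq_card s1) (subset_leq_card s2)) _.
rewrite eqU.
apply: proper_card; apply/properP; split.
  by rewrite subUset; apply/andP; split; apply/subsetP=> i; rewrite inE => /andP[].
by exists (cI e) => //; rewrite !inE !ltnn /= !andbF.
Qed.

Lemma inSe (e : E) : v \in val e -> inS (col e).
Proof. by move=> ve; apply/existsP; exists e; rewrite ve eqxx. Qed.

Lemma bound (e : E) : 1 + outdeg arc e <= @f_kv V adj D v e.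
Proof.
rewrite /f_kv; case: ifP => ve.
  apply: (@leq_trans #|[set i : 'I_D | inS i]|).
    apply: cnt.
    - move=> y h lt; rewrite inE /=; case cv: (c v).
        apply: inSe; rewrite in_e; move: ve; rewrite in_e => /orP[/eqP va|/eqP vb].
          by apply/orP; left; apply/eqP; rewrite -h -va.
        by move: (cb e); rewrite -vb cv.
      move: lt; rewrite /r /Rv (inSe ve) cv /=; have := c1 y; have := c1 e.
      by case: (inS (col y)) => //=; lia.
    - move=> y h lt; rewrite inE /=; case cv: (c v).
        move: lt; rewrite /r /Rv (inSe ve) cv /=; have := c1 y; have := c1 e.
        by case: (inS (col y)) => //=; lia.
      apply: inSe; rewrite in_e; move: ve; rewrite in_e => /orP[/eqP va|/eqP vb].
        by move: (ca e); rewrite -va cv.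
      by apply/orP; right; apply/eqP; rewrite -h -vb.
    - by rewrite inE /=; apply: inSe.
  apply: leq_trans deg_v.
  apply: leq_trans (leq_imset_card cI _); apply: subset_leq_card.
  apply/subsetP=> i; rewrite inE => /existsP[e' /andP[ve' /eqP ci]].
  by apply/imsetP; exists e'; rewrite ?inE //; apply: val_inj.
have := @cnt e setT (fun _ _ _ => in_setT _) (fun _ _ _ => in_setT _) (in_setT _).
by rewrite cardsT card_ord.
Qed.

Lemma fkp : f_kernel_perfect_orientation (@line_adj V adj) (@f_kv V adj D v) arc.
Proof. split; [exact: orient | exact: kp | exact: bound]. Qed.
End Main.

Unset Implicit Arguments.
Set Strict Implicit.
Theorem mainTheorem13 (V : finType) (adj : rel V) :
  symmetric adj -> irreflexive adj -> bipartite adj ->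
  strongly_edge_orientable adj (maxdeg adj).
Proof.
move=> sym _ [c hc] v.
have dA : forall x, #|[set e : edge adj | pa c v e == x]| <= maxdeg adj.
  by move=> x; apply: leq_trans (degA v sym hc x) (degD adj x).
have dB : forall x, #|[set e : edge adj | pb c v e == x]| <= maxdeg adj.
  by move=> x; apply: leq_trans (degB v sym hc x) (degD adj x).
have [col [c1 c2 c3]] := konig dA dB.
have c1' : forall e, col e < maxdeg adj by move=> e; apply: c1; rewrite inE.
have c2' : forall e e', pa c v e = pa c v e' -> col e = col e' -> e = e'.
  by move=> e e'; apply: c2; rewrite inE.
have c3' : forall e e', pb c v e = pb c v e' -> col e = col e' -> e = e'.
  by move=> e e'; apply: c3; rewrite inE.
by exists (arc c v col); exact: (fkp sym hc c1' c2' c3').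
Qed.
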